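(* There exist a finite family $\mathcal{F}$ of pairwise intersecting compact convex sets in the plane with the $(4,3)$ property (among any four distinct members some three have a common point) and a member $D\in\mathcal{F}$ such that the directed graph $G_D$ contains a directed cycle of length 5.
   Context: For three pairwise intersecting compact convex sets $X,Y,Z$ in the plane: $o(XYZ)=0$ if $X\cap Y\cap Z\neq\emptyset$; otherwise $o(XYZ)=o(xyz)$ for any $x\in Y\cap Z$, $y\in X\cap Z$, $z\in X\cap Y$, where for points $o(xyz)=+1$ for a counterclockwise and $-1$ for a clockwise triangle (independent of the choice). For $D\in\mathcal{F}$, $G_D$ is the directed graph on vertex set $\mathcal{F}\setminus\{D\}$ with an arc from $A$ to $B$ if and only if $o(ABD)=1$. *)

(* Defs.v *)
From HB Require Import structures.
From mathcomp Require Import all_boot all_order all_algebra.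
From mathcomp Require Import all_classical all_reals all_analysis.
From mathcomp Require Import Rstruct Rstruct_topology.

Set Implicit Arguments. Unset Strict Implicit. Unset Printing Implicit Defensive.
Import Order.TTheory GRing.Theory Num.Theory.
Local Open Scope classical_set_scope.
Local Open Scope ring_scope.

From Stdlib Require Rdefinitions.
Notation R := Rdefinitions.R.
Definition plane := (R * R)%type.

Definition convex_set (S : set plane) : Prop :=
  forall p q : plane, S p -> S q -> forall t : R, 0 <= t -> t <= 1 ->
    S ((1 - t) * p.1 + t * q.1, (1 - t) * p.2 + t * q.2).

Definition compact_convex (S : set plane) : Prop :=
  @compact (R * R)%type S /\ convex_set S.

(* twice the signed area of the triangle xyz; > 0 iff xyz is counterclockwise *)
Definition orient_det (x y z : plane) : R :=
  (y.1 - x.1) * (z.2 - x.2) - (y.2 - x.2) * (z.1 - x.1).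

(* o(XYZ) = 1 : X, Y, Z have no common plane, and for (any / every) choice
   x in Y∩Z, y in X∩Z, z in X∩Y the triangle xyz is counterclockwise. *)
Definition orient_pos (X Y Z : set plane) : Prop :=
  X `&` Y `&` Z = set0 /\
  forall x y z : plane, (Y `&` Z) x -> (X `&` Z) y -> (X `&` Y) z ->
    0 < orient_det x y z.

Definition pairwise_intersecting (n : nat) (F : 'I_n -> set plane) : Prop :=
  forall i j : 'I_n, F i `&` F j !=set0.

Definition prop43 (n : nat) (F : 'I_n -> set plane) : Prop :=
  forall a b c d : 'I_n, uniq [:: a; b; c; d] ->
    exists i j k : 'I_n,
      [/\ uniq [:: i; j; k], all (fun m => m \in [:: a; b; c; d]) [:: i; j; k]
        & F i `&` F j `&` F k !=set0].

Definition GD_arc (n : nat) (F : 'I_n -> set plane) (d a b : 'I_n) : Prop :=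
  a != d /\ b != d /\ orient_pos (F a) (F b) (F d).

Definition GD_has_cycle (n : nat) (F : 'I_n -> set plane) (d : 'I_n) (k : nat)
  : Prop :=
  exists v : 'I_k -> 'I_n, injective v /\
    forall i : 'I_k, forall j : 'I_k, (val j = (val i).+1 %% k)%N ->
      GD_arc F d (v i) (v j).

(* Main.v *)
Require Import Defs.
From mathcomp Require Import all_boot all_order all_algebra.
From mathcomp Require Import all_classical all_reals all_analysis.
From mathcomp Require Import Rstruct Rstruct_topology.
From mathcomp Require Import lra ring.
Import Order.TTheory GRing.Theory Num.Theory.
Local Open Scope classical_set_scope.
Local Open Scope ring_scope.

Lemma cont_fst : continuous (fun p : plane => p.1).
Proof. move=> p; exact: cvg_fst. Qed.
Lemma cont_snd : continuous (fun p : plane => p.2).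
Proof. move=> p; exact: cvg_snd. Qed.

Lemma cont_aff (a b c : R) : continuous (fun p : plane => a * p.1 + b * p.2 + c).
Proof.
move=> p.
apply: (@continuousD _ R^o _ (fun p : plane => a * p.1 + b * p.2) (fun=> c)); last exact: cvg_cst.
apply: (@continuousD _ R^o _ (fun p : plane => a * p.1) (fun p : plane => b * p.2)).
  apply: (@continuousM _ _ (fun=> a) (fun p : plane => p.1)); [exact: cvg_cst| exact: cont_fst].
apply: (@continuousM _ _ (fun=> b) (fun p : plane => p.2)); [exact: cvg_cst| exact: cont_snd].
Qed.

Lemma closed_aff (a b c : R) : closed [set p : plane | 0 <= a * p.1 + b * p.2 + c].
Proof.
have -> : [set p : plane | 0 <= a * p.1 + b * p.2 + c] =
  (fun p : plane => a * p.1 + b * p.2 + c) @^-1` [set x | 0 <= x] by [].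
apply: (proj1 (continuous_closedP _) (@cont_aff a b c)).
exact: closed_ge.
Qed.

Lemma closed_hp (A B : plane) : closed [set p : plane | 0 <= orient_det A B p].
Proof.
have -> : [set p : plane | 0 <= orient_det A B p] =
  [set p : plane | 0 <= (- (B.2 - A.2)) * p.1 + (B.1 - A.1) * p.2
                        + (- (B.1 - A.1) * A.2 + (B.2 - A.2) * A.1)].
  apply/seteqP; split => p /=;
  (have -> : orient_det A B p = (- (B.2 - A.2)) * p.1 + (B.1 - A.1) * p.2
                        + (- (B.1 - A.1) * A.2 + (B.2 - A.2) * A.1)
     by rewrite /orient_det; ring); by [].
exact: closed_aff.
Qed.

Definition poly (l : seq (plane * plane)) : set plane :=
  [set p | foldr (fun e P => 0 <= orient_det e.1 e.2 p /\ P) True l].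

Lemma closed_poly l : closed (poly l).
Proof.
elim: l => [|e l IH].
  have -> : poly [::] = setT by [].
  exact: closedT.
have -> : poly (e :: l) = [set p : plane | 0 <= orient_det e.1 e.2 p] `&` poly l by [].
apply: closedI => //; exact: closed_hp.
Qed.

Lemma convex_poly l : Defs.convex_set (poly l).
Proof.
elim: l => [|e l IH]; first by [].
move=> p q [hp Hp] [hq Hq] t t0 t1; split; last exact: IH.
move: hp hq; rewrite /orient_det /= => hp hq.
nra.
Qed.

Lemma compact_poly l (M : R) :
  (forall p, poly l p -> (-M <= p.1 <= M) /\ (-M <= p.2 <= M)) -> compact (poly l).
Proof.
move=> hb.
apply: (@subclosed_compact _ _ (`[-M, M]%classic `*` `[-M, M]%classic)).
- exact: closed_poly.
- apply: compact_setX; exact: segment_compact.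
- move=> p /hb [h1 h2]; split => /=; by rewrite in_itv /=.
Qed.

Definition P0 : plane := (0, 6).
Definition P1 : plane := (-6, 2).
Definition P2 : plane := (-4, -4).
Definition P3 : plane := (4, -4).
Definition P4 : plane := (6, 2).
Definition ear A B C := poly [:: (A, B); (B, C); (C, A)].
Definition Dset := poly [:: ((-4, -2), (4, -2)); ((4, -2), (4, 4));
                            ((4, 4), (-4, 4)); ((-4, 4), (-4, -2))].

Definition Fn (k : nat) : set plane :=
  match k with
  | 1 => ear P4 P0 P1
  | 2 => ear P1 P2 P3
  | 3 => ear P3 P4 P0
  | 4 => ear P0 P1 P2
  | 5 => ear P2 P3 P4
  | _ => Dset
  end.

Definition Fl (k : nat) : seq (plane * plane) :=
  match k with
  | 1 => [:: (P4, P0); (P0, P1); (P1, P4)]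
  | 2 => [:: (P1, P2); (P2, P3); (P3, P1)]
  | 3 => [:: (P3, P4); (P4, P0); (P0, P3)]
  | 4 => [:: (P0, P1); (P1, P2); (P2, P0)]
  | 5 => [:: (P2, P3); (P3, P4); (P4, P2)]
  | _ => [:: ((-4, -2), (4, -2)); ((4, -2), (4, 4));
                            ((4, 4), (-4, 4)); ((-4, 4), (-4, -2))]
  end.

Lemma FnE k : Fn k = poly (Fl k).
Proof. by do 6?[case: k => [|k]//]. Qed.

Ltac unf := rewrite /Fn /ear /Dset /poly /orient_det /P0 /P1 /P2 /P3 /P4 /=.
Ltac dest := repeat match goal with h : _ /\ _ |- _ => destruct h end.

Lemma Fn_compact k : compact_convex (Fn k).
Proof.
rewrite FnE; split; last exact: convex_poly.
apply: (@compact_poly _ 6) => -[p1 p2].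
do 6?[case: k => [|k]]; rewrite /Fl /poly /orient_det /P0 /P1 /P2 /P3 /P4 /= => h; dest;
  (split; apply/andP; split; lra).
Qed.

Definition Dp : plane := (0, 0).
Lemma or12 : orient_pos (Fn 1) (Fn 2) (Fn 0).
Proof.
split.
  apply/seteqP; split => // -[p1 p2]; unf => h; dest; lra.
move=> [x1 x2] [y1 y2] [z1 z2]; unf => hx hy hz; dest.
have hz1 : z1 = -6 by lra.
have hz2 : z2 = 2 by lra.
subst z1 z2; nra.
Qed.
Lemma or23 : orient_pos (Fn 2) (Fn 3) (Fn 0).
Proof.
split.
  apply/seteqP; split => // -[p1 p2]; unf => h; dest; lra.
move=> [x1 x2] [y1 y2] [z1 z2]; unf => hx hy hz; dest.
have hz1 : z1 = 4 by lra.
have hz2 : z2 = -4 by lra.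
subst z1 z2; nra.
Qed.
Lemma or34 : orient_pos (Fn 3) (Fn 4) (Fn 0).
Proof.
split.
  apply/seteqP; split => // -[p1 p2]; unf => h; dest; lra.
move=> [x1 x2] [y1 y2] [z1 z2]; unf => hx hy hz; dest.
have hz1 : z1 = 0 by lra.
have hz2 : z2 = 6 by lra.
subst z1 z2; nra.
Qed.
Lemma or45 : orient_pos (Fn 4) (Fn 5) (Fn 0).
Proof.
split.
  apply/seteqP; split => // -[p1 p2]; unf => h; dest; lra.
move=> [x1 x2] [y1 y2] [z1 z2]; unf => hx hy hz; dest.
have hz1 : z1 = -4 by lra.
have hz2 : z2 = -4 by lra.
subst z1 z2; nra.
Qed.
Lemma or51 : orient_pos (Fn 5) (Fn 1) (Fn 0).
Proof.
split.
  apply/seteqP; split => // -[p1 p2]; unf => h; dest; lra.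
move=> [x1 x2] [y1 y2] [z1 z2]; unf => hx hy hz; dest.
have hz1 : z1 = 6 by lra.
have hz2 : z2 = 2 by lra.
subst z1 z2; nra.
Qed.
Definition trips : seq (nat * nat * nat) :=
  [:: (3,1,4); (1,4,2); (4,2,5); (2,5,3); (5,3,1);
      (0,1,4); (0,4,2); (0,2,5); (0,5,3); (0,3,1)].
Definition pts : seq plane :=
  [:: P0; P1; P2; P3; P4; (-2, 3); (-3, 0); (0, -2); (3, 0); (2, 3)].
Definition tset (t : nat * nat * nat) : seq nat := [:: t.1.1; t.1.2; t.2].

Lemma cover n k : (n < 10)%N -> k \in tset (nth (0,0,0)%N trips n) ->
  Fn k (nth (0,0) pts n).
Proof.
do 10?[case: n => [|n]].
all: move=> // _.
all: rewrite /= !inE.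
all: move=> /or3P [] /eqP ->.
all: unf.
all: repeat split; lra. Qed.

Definition F (i : 'I_6) : set plane := Fn (val i).

Definition trin (a b c : nat) : bool :=
  has (fun n => [&& a \in tset (nth (0,0,0)%N trips n),
                    b \in tset (nth (0,0,0)%N trips n) &
                    c \in tset (nth (0,0,0)%N trips n)]) (iota 0 10).

Lemma tri_ok (a b c : 'I_6) : trin a b c -> F a `&` F b `&` F c !=set0.
Proof.
case/hasP => n; rewrite mem_iota add0n => /andP [_ hn] /and3P [ha hb hc].
exists (nth (0,0) pts n); split; [split|]; exact: cover.
Qed.

Lemma key43 : all (fun a => all (fun b => all (fun c => all (fun d =>
  uniq [:: a; b; c; d] ==> [|| trin a b c, trin a b d, trin a c d | trin b c d])
  (iota 0 6)) (iota 0 6)) (iota 0 6)) (iota 0 6).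
Proof. by vm_compute. Qed.

Lemma key2 : all (fun a => all (fun b => trin a b b) (iota 0 6)) (iota 0 6).
Proof. by vm_compute. Qed.

Lemma in6 (x : 'I_6) : val x \in iota 0 6.
Proof. by rewrite mem_iota add0n ltn_ord. Qed.

Lemma F_prop43 : prop43 F.
Proof.
move=> a b c d hu.
have := key43.
move=> /allP /(_ _ (in6 a)) /allP /(_ _ (in6 b)) /allP /(_ _ (in6 c)) /allP /(_ _ (in6 d)).
have hu' : uniq [:: val a; val b; val c; val d].
  by rewrite -[[:: val a; val b; val c; val d]]/(map val [:: a; b; c; d]) (map_inj_uniq val_inj).
rewrite hu' /=.
move: hu; rewrite /= !inE !negb_or => /and4P [/and3P[hab hac had] /andP[hbc hbd] hcd _].
case/or4P => h.
- exists a, b, c; split; last exact: tri_ok.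
    by rewrite /= !inE !negb_or hab hac hbc.
  by rewrite /= !inE !eqxx ?orbT.
- exists a, b, d; split; last exact: tri_ok.
    by rewrite /= !inE !negb_or hab had hbd.
  by rewrite /= !inE !eqxx ?orbT.
- exists a, c, d; split; last exact: tri_ok.
    by rewrite /= !inE !negb_or hac had hcd.
  by rewrite /= !inE !eqxx ?orbT.
- exists b, c, d; split; last exact: tri_ok.
    by rewrite /= !inE !negb_or hbc hbd hcd.
  by rewrite /= !inE !eqxx ?orbT.
Qed.

Lemma F_pairwise : pairwise_intersecting F.
Proof.
move=> i j.
have := key2.
move=> /allP /(_ _ (in6 i)) /allP /(_ _ (in6 j)) h.
have [p [[hi hj] _]] := @tri_ok i j j h.
by exists p.
Qed.

Ltac sepL H q :=
  let h := fresh in exfalso; clear -H;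
  have h := proj1 (H q) ltac:(unf; repeat split; lra);
  move: h; unf => h; dest; lra.
Ltac sepR H q :=
  let h := fresh in exfalso; clear -H;
  have h := proj2 (H q) ltac:(unf; repeat split; lra);
  move: h; unf => h; dest; lra.

Lemma F_inj : injective F.
Proof.
move=> i j H; apply: val_inj.
have H' : forall p, F i p <-> F j p by move=> p; rewrite H.
move: H' {H}; rewrite /F.
case: i => [[|[|[|[|[|[|//]]]]]] ?]; case: j => [[|[|[|[|[|[|//]]]]]] ?] //= H.
- sepR H P0.
- sepR H P1.
- sepR H P0.
- sepR H P0.
- sepR H P2.
- sepL H P0.
- sepL H P0.
- sepL H P1.
- sepR H P2.
- sepL H P0.
- sepL H P1.
- sepR H P0.
- sepR H P0.
- sepR H P0.
- sepL H P1.
- sepL H P0.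
- sepR H P1.
- sepL H P0.
- sepR H P1.
- sepL H P0.
- sepL H P0.
- sepL H P2.
- sepL H P0.
- sepL H P1.
- sepL H P0.
- sepL H P2.
- sepR H P0.
- sepR H P1.
- sepR H P0.
- sepR H P0.
Qed.

Theorem claim9 :
  exists (n : nat) (F : 'I_n -> set plane),
    injective F /\
    (forall i, compact_convex (F i)) /\
    pairwise_intersecting F /\
    prop43 F /\
    exists D : 'I_n, GD_has_cycle F D 5.
Proof.
exists 6, F; split; first exact: F_inj.
split; first by move=> i; exact: Fn_compact.
split; first exact: F_pairwise.
split; first exact: F_prop43.
exists ord0; exists (fun j : 'I_5 => lift ord0 j); split; first exact: lift_inj.
move=> i j hij; split; first by rewrite eq_sym neq_lift.
split; first by rewrite eq_sym neq_lift.
rewrite /F.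
case: i hij => [[|[|[|[|[|//]]]]] ?]; case: j => [[|[|[|[|[|//]]]]] ?] hij.
all: first [ exact: or12 | exact: or23 | exact: or34 | exact: or45 | exact: or51
           | (exfalso; move: hij; vm_compute; discriminate) ].
Qed.
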